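(* Let $\mathfrak g=\mathfrak r_3$ (basis $\{e_1,e_2,e_3\}$, nonzero brackets $[e_1,e_2]=e_2+e_3$, $[e_1,e_3]=e_3$). Then the action of $\mathbb R^\times\mathrm{Aut}(\mathfrak g)$ on $\mathrm{GL}_3(\mathbb R)/\mathrm{O}(3)$ has no minimal orbits (with respect to the natural Riemannian metric).
   Context: Identify $\mathfrak g\cong\mathbb R^3$ via the basis. $\mathrm{GL}_3(\mathbb R)/\mathrm{O}(3)$ is identified with the set of inner products on $\mathfrak g$ via $g.\langle\cdot,\cdot\rangle=\langle g^{-1}\cdot,g^{-1}\cdot\rangle$. The natural Riemannian metric is the $\mathrm{GL}_3(\mathbb R)$-invariant metric corresponding to $\langle X,Y\rangle=\mathrm{tr}(XY)$ on $\mathrm{sym}(3)$ (reductive complement $\mathfrak{gl}_3=\mathfrak o(3)\oplus\mathrm{sym}(3)$). $\mathbb R^\times\mathrm{Aut}(\mathfrak g)=\{c\varphi:c\ne0,\ \varphi\in\mathrm{Aut}(\mathfrak g)\}\subset\mathrm{GL}_3(\mathbb R)$ acts by restriction. An orbit is minimal if its mean curvature vector vanishes identically. *)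

(* Defs.v *)
From HB Require Import structures.
From mathcomp Require Import all_boot all_order all_algebra.
From mathcomp Require Import all_classical all_reals all_analysis.
Set Implicit Arguments. Unset Strict Implicit. Unset Printing Implicit Defensive.
Import Order.TTheory GRing.Theory Num.Theory.
Import numFieldNormedType.Exports.
Local Open Scope classical_set_scope.
Local Open Scope ring_scope.

Section R3.
Variable R : realType.

(* g = r_3 identified with R^3 (column vectors) via the basis e_1,e_2,e_3
   (indices 0,1,2).  Bracket by bilinearity from
   [e1,e2] = e2 + e3, [e1,e3] = e3, [e2,e3] = 0. *)
Definition r3_bracket (x y : 'cV[R]_3) : 'cV[R]_3 :=
  let a := x 0 0 * y 1 0 - x 1 0 * y 0 0 in      (* coefficient of [e1,e2] *)
  let b := x 0 0 * y (inord 2) 0 - x (inord 2) 0 * y 0 0 in  (* coefficient of [e1,e3] *)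
  \col_(i < 3) (if i == 0 :> nat then 0 else if i == 1 :> nat then a else a + b).

Definition is_aut (phi : 'M[R]_3) : Prop :=
  phi \in unitmx /\ forall x y, phi *m r3_bracket x y = r3_bracket (phi *m x) (phi *m y).

Definition RxAut : set 'M[R]_3 :=
  [set g | exists c : R, exists phi, c != 0 /\ is_aut phi /\ g = c *: phi].

(* GL_3(R)/O(3) = inner products on R^3, represented by their Gram matrices
   S (<x,y> = x^T S y): symmetric positive definite matrices. *)
Definition posdef (S : 'M[R]_3) : Prop :=
  S^T = S /\ forall x : 'cV[R]_3, x != 0 -> 0 < (x^T *m S *m x) 0 0.

(* g.<.,.> = <g^-1 ., g^-1 .> *)
Definition act (g S : 'M[R]_3) : 'M[R]_3 := (invmx g)^T *m S *m invmx g.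

(* The GL_3-invariant metric on the tangent space Sym(3) at S corresponding
   to tr(XY) on sym(3) at the base point (the standard inner product, S = 1):
   <A,B>_S = 1/4 tr(S^-1 A S^-1 B). *)
Definition metric (S A B : 'M[R]_3) : R :=
  4%:R^-1 * \tr (invmx S *m A *m invmx S *m B).

(* Levi-Civita covariant derivative along a curve c of its velocity c',
   at time t: D_t c' = c'' - c' c^-1 c' (Christoffel symbols of the above
   metric on the open set of positive definite matrices in Sym(3)). *)
Definition cov_accel (c : R -> 'M[R]_3) (t : R) : 'M[R]_3 :=
  derive1 (derive1 c) t - derive1 c t *m invmx (c t) *m derive1 c t.

Definition adm_curve (gam : R -> 'M[R]_3) : Prop :=
  (forall t, gam t \in RxAut) /\ gam 0 = 1 /\
  (forall t, derivable gam t 1) /\ (forall t, derivable (derive1 gam) t 1).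

Definition ocurve (gam : R -> 'M[R]_3) (Q : 'M[R]_3) : R -> 'M[R]_3 :=
  fun t => act (gam t) Q.

Definition tangent_space (Q : 'M[R]_3) : set 'M[R]_3 :=
  [set v | exists gam, adm_curve gam /\ v = derive1 (ocurve gam Q) 0].

Definition orbit (S : 'M[R]_3) : set 'M[R]_3 := [set act g S | g in RxAut].

Definition onb_curves (Q : 'M[R]_3) (k : nat) (gam : 'I_k -> R -> 'M[R]_3) :=
  (forall i, adm_curve (gam i)) /\
  (forall i j, metric Q (derive1 (ocurve (gam i) Q) 0)
                        (derive1 (ocurve (gam j) Q) 0) = (i == j)%:R) /\
  (forall v, tangent_space Q v ->
     exists a : 'I_k -> R, v = \sum_(i < k) a i *: derive1 (ocurve (gam i) Q) 0).

(* Mean curvature vector of the orbit at Q, computed from such a family: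
   sum_i II(v_i, v_i), with II(v,v) the normal component of the covariant
   acceleration of a curve in the orbit with velocity v. *)
Definition mean_curv (Q : 'M[R]_3) (k : nat) (gam : 'I_k -> R -> 'M[R]_3) :=
  let v i := derive1 (ocurve (gam i) Q) 0 in
  let w := \sum_(i < k) cov_accel (ocurve (gam i) Q) 0 in
  w - \sum_(i < k) metric Q w (v i) *: v i.

Definition minimal_orbit (S : 'M[R]_3) : Prop :=
  forall Q, orbit S Q ->
  forall k (gam : 'I_k -> R -> 'M[R]_3), onb_curves Q gam -> mean_curv Q gam = 0.

End R3.

(* Main.v *)
Require Import Defs.
From HB Require Import structures.
From mathcomp Require Import all_boot all_order all_algebra.
From mathcomp Require Import all_classical all_reals all_analysis.
From mathcomp Require Import ring lra.
Set Implicit Arguments. Unset Strict Implicit. Unset Printing Implicit Defensive.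
Import Order.TTheory GRing.Theory Num.Theory.
Import numFieldNormedType.Exports.
Local Open Scope ring_scope.


Notation o0 := (@Ordinal 3 0 isT).
Notation o1 := (@Ordinal 3 1 isT).
Notation o2 := (@Ordinal 3 2 isT).
Ltac ocase i := let H := fresh in case: i => [[|[|[|?]]] H] //.

Section Infra.
Variable R : realType.

Definition mk3 (a b c d e f g h k : R) : 'M[R]_3 :=
  \matrix_(i < 3, j < 3)
   nth 0 (nth [::] [:: [:: a; b; c]; [:: d; e; f]; [:: g; h; k]] i) j.
Definition col3 (a b c : R) : 'cV[R]_3 := \col_(i < 3) nth 0 [:: a; b; c] i.


Lemma ordz : (0 : 'I_3) = o0. Proof. exact: val_inj. Qed.
Lemma ordo : (1 : 'I_3) = o1. Proof. exact: val_inj. Qed.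
Lemma ord2 : (inord 2 : 'I_3) = o2. Proof. by apply: val_inj; rewrite /= inordK. Qed.
Lemma ord1z (j : 'I_1) : j = 0. Proof. by apply: val_inj; case: j => [[|]]. Qed.


Lemma mk3_eta (M : 'M[R]_3) :
  M = mk3 (M o0 o0) (M o0 o1) (M o0 o2) (M o1 o0) (M o1 o1) (M o1 o2)
          (M o2 o0) (M o2 o1) (M o2 o2).
Proof.
apply/matrixP => i j; rewrite mxE; ocase i; ocase j; by congr (M _ _); apply: val_inj.
Qed.

Lemma col3_eta (x : 'cV[R]_3) : x = col3 (x o0 0) (x o1 0) (x o2 0).
Proof.
apply/matrixP => i j; rewrite mxE (ord1z j); ocase i; by congr (x _ _); apply: val_inj.
Qed.

Lemma mk3_mul a b c d e f g h k a' b' c' d' e' f' g' h' k' :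
  mk3 a b c d e f g h k *m mk3 a' b' c' d' e' f' g' h' k' =
  mk3 (a*a' + b*d' + c*g') (a*b' + b*e' + c*h') (a*c' + b*f' + c*k')
      (d*a' + e*d' + f*g') (d*b' + e*e' + f*h') (d*c' + e*f' + f*k')
      (g*a' + h*d' + k*g') (g*b' + h*e' + k*h') (g*c' + h*f' + k*k').
Proof.
apply/matrixP => i j; rewrite !mxE !big_ord_recr big_ord0 /= !mxE add0r.
by ocase i; ocase j.
Qed.

Lemma mk3_mulc a b c d e f g h k x y z :
  mk3 a b c d e f g h k *m col3 x y z =
  col3 (a*x + b*y + c*z) (d*x + e*y + f*z) (g*x + h*y + k*z).
Proof.
apply/matrixP => i j; rewrite !mxE !big_ord_recr big_ord0 /= !mxE add0r.
by ocase i.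
Qed.

Lemma mk3_tr a b c d e f g h k :
  (mk3 a b c d e f g h k)^T = mk3 a d g b e h c f k.
Proof. by apply/matrixP => i j; rewrite !mxE; ocase i; ocase j. Qed.

Lemma mk3_trace a b c d e f g h k : \tr (mk3 a b c d e f g h k) = a + e + k.
Proof. by rewrite /mxtrace !big_ord_recr big_ord0 /= !mxE add0r. Qed.

Lemma quad3 a b c d e f g h k x y z :
  ((col3 x y z)^T *m mk3 a b c d e f g h k *m col3 x y z) 0 0 =
  x * (a*x + b*y + c*z) + y * (d*x + e*y + f*z) + z * (g*x + h*y + k*z).
Proof.
rewrite -mulmxA mk3_mulc !mxE !big_ord_recr big_ord0 /= !mxE add0r.
by [].
Qed.

Lemma mk3_add a b c d e f g h k a' b' c' d' e' f' g' h' k' :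
  mk3 a b c d e f g h k + mk3 a' b' c' d' e' f' g' h' k' =
  mk3 (a+a') (b+b') (c+c') (d+d') (e+e') (f+f') (g+g') (h+h') (k+k').
Proof. by apply/matrixP => i j; rewrite !mxE; ocase i; ocase j. Qed.

Lemma mk3_opp a b c d e f g h k :
  - mk3 a b c d e f g h k = mk3 (-a) (-b) (-c) (-d) (-e) (-f) (-g) (-h) (-k).
Proof. by apply/matrixP => i j; rewrite !mxE; ocase i; ocase j. Qed.

Lemma mk3_scale r a b c d e f g h k :
  r *: mk3 a b c d e f g h k = mk3 (r*a) (r*b) (r*c) (r*d) (r*e) (r*f) (r*g) (r*h) (r*k).
Proof. by apply/matrixP => i j; rewrite !mxE; ocase i; ocase j. Qed.

Lemma mk3_one : (1%:M : 'M[R]_3) = mk3 1 0 0 0 1 0 0 0 1.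
Proof. by apply/matrixP => i j; rewrite !mxE; ocase i; ocase j. Qed.

Lemma mk3_zero : (0 : 'M[R]_3) = mk3 0 0 0 0 0 0 0 0 0.
Proof. by apply/matrixP => i j; rewrite !mxE; ocase i; ocase j. Qed.

Lemma col3_zero : (0 : 'cV[R]_3) = col3 0 0 0.
Proof. by apply/matrixP => i j; rewrite !mxE; ocase i. Qed.

Lemma invmx_eq (A B : 'M[R]_3) : A *m B = 1%:M -> invmx A = B.
Proof.
move=> AB; have [uA _] := mulmx1_unit AB.
by rewrite -[invmx A]mulmx1 -AB mulmxA mulVmx // mul1mx.
Qed.

Definition form (A P B Qq Rr : R) := mk3 A 0 0 P B 0 Qq Rr B.
Definition forminv (A P B Qq Rr : R) :=
  form A^-1 (- P / (A * B)) B^-1 ((P * Rr - B * Qq) / (A * B ^+ 2)) (- Rr / B ^+ 2).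

Lemma form_inv A P B Qq Rr : A != 0 -> B != 0 ->
  invmx (form A P B Qq Rr) = forminv A P B Qq Rr.
Proof.
move=> A0 B0; apply: invmx_eq; rewrite /forminv /form mk3_mul mk3_one.
congr mk3; field; by rewrite ?A0 ?B0 ?andbT.
Qed.

End Infra.

Section Grp.
Variable R : realType.
Implicit Types A P B Qq Rr : R.

Lemma mul_eq0_r (a b : R) : a != 0 -> a * b = 0 -> b = 0.
Proof. by move=> a0 /eqP; rewrite mulf_eq0 (negbTE a0) => /eqP. Qed.

Lemma bracket3 (a b c d e f : R) :
  r3_bracket (col3 a b c) (col3 d e f) =
  col3 0 (a*e - b*d) (a*e - b*d + (a*f - c*d)).
Proof.
rewrite /r3_bracket ordz ordo ord2; apply/matrixP => i j; rewrite !mxE /=.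
by ocase i.
Qed.

Lemma form_mul_inv A P B Qq Rr : A != 0 -> B != 0 ->
  form A P B Qq Rr *m forminv A P B Qq Rr = 1%:M.
Proof.
move=> A0 B0; rewrite /forminv /form mk3_mul mk3_one.
congr mk3; field; by rewrite ?A0 ?B0 ?andbT.
Qed.

Lemma form_unit A P B Qq Rr : A != 0 -> B != 0 -> form A P B Qq Rr \in unitmx.
Proof. by move=> A0 B0; case: (mulmx1_unit (form_mul_inv P Qq Rr A0 B0)). Qed.

Lemma form_RxAut A P B Qq Rr : A != 0 -> B != 0 -> RxAut (form A P B Qq Rr).
Proof.
move=> A0 B0.
have BA0 : B / A != 0 by rewrite mulf_neq0 ?invr_eq0.
exists A, (form 1 (P/A) (B/A) (Qq/A) (Rr/A)); split => //; split.
  split; first exact: form_unit.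
  move=> x y; rewrite (col3_eta x) (col3_eta y) /form !mk3_mulc !bracket3 mk3_mulc.
  congr col3; ring.
rewrite /form mk3_scale; congr mk3; field; by rewrite ?A0 ?B0 ?andbT.
Qed.

Lemma forminv_RxAut A P B Qq Rr : A != 0 -> B != 0 ->
  RxAut (forminv A P B Qq Rr).
Proof. by move=> A0 B0; apply: form_RxAut; rewrite ?invr_eq0. Qed.

Lemma col3_inj (a b c a' b' c' : R) : col3 a b c = col3 a' b' c' -> [/\ a = a', b = b' & c = c'].
Proof.
move=> E; split.
- by have := congr1 (fun v : 'cV[R]_3 => v o0 0) E; rewrite !mxE.
- by have := congr1 (fun v : 'cV[R]_3 => v o1 0) E; rewrite !mxE.
- by have := congr1 (fun v : 'cV[R]_3 => v o2 0) E; rewrite !mxE.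
Qed.

Lemma RxAut_form (g : 'M[R]_3) : RxAut g ->
  [/\ g o0 o0 != 0, g o1 o1 != 0 &
   g = form (g o0 o0) (g o1 o0) (g o1 o1) (g o2 o0) (g o2 o1)].
Proof.
move=> [c [phi [c0 [[uphi hphi] ->]]]].
rewrite (mk3_eta phi).
set p00 := phi o0 o0; set p01 := phi o0 o1; set p02 := phi o0 o2.
set p10 := phi o1 o0; set p11 := phi o1 o1; set p12 := phi o1 o2.
set p20 := phi o2 o0; set p21 := phi o2 o1; set p22 := phi o2 o2.
have E1 := hphi (col3 1 0 0) (col3 0 1 0).
have E2 := hphi (col3 1 0 0) (col3 0 0 1).
rewrite (mk3_eta phi) !mk3_mulc !bracket3 !mk3_mulc in E1 E2.
rewrite -/p00 -/p01 -/p02 -/p10 -/p11 -/p12 -/p20 -/p21 -/p22 in E1 E2.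
have [e10 e11 e12] := col3_inj E1.
have [e20 e21 e22] := col3_inj E2.
rewrite ?(oppr0, mulr0, mul0r, mulr1, mul1r, addr0, add0r, subr0, subrr) in e10 e11 e12 e20 e21 e22.
clear E1 E2.
have col2 : ~ (p02 = 0 /\ p12 = 0 /\ p22 = 0).
  move=> [z0 [z1 z2]].
  have : phi *m col3 0 0 1 = 0.
    rewrite (mk3_eta phi) mk3_mulc col3_zero -/p02 -/p12 -/p22 z0 z1 z2.
    congr col3; ring.
  move/(congr1 (mulmx (invmx phi))); rewrite mulmxA mulVmx // mul1mx mulmx0 col3_zero.
  by move/col3_inj => [_ _]; move/eqP; rewrite oner_eq0.
have z02 : p02 = 0 by [].
have z01 : p01 = 0 by move: e10; rewrite z02 addr0.
rewrite z01 z02 ?(oppr0, mulr0, mul0r, mulr1, mul1r, addr0, add0r, subr0, subrr) in e11 e12 e21 e22.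
have n22 : p22 != 0.
  apply/eqP => z22; apply: col2; split => //; split => //.
  have h : p12 = 0 by rewrite e21; move: e22; rewrite z22 mulr0 addr0 => <-.
  by [].
have z12 : p12 = 0.
  apply/eqP; apply: contraT => n12.
  have h00 : p00 = 1.
    apply: subr0_eq; apply: (mul_eq0_r n12).
    by rewrite mulrBr mulr1 mulrC -e21 subrr.
  have hz : p12 = 0 by rewrite h00 in e22; lra.
  by move: n12; rewrite hz eqxx.
rewrite z12 ?(mulr0, addr0, add0r) in e21 e22 e11 e12.
have h00 : p00 = 1.
  apply: subr0_eq; apply: (mul_eq0_r n22).
  by rewrite mulrBr mulr1 mulrC -e22 subrr.
rewrite h00 in e12.
have h11 : p11 = p22 by lra.
rewrite mk3_scale !mxE /=; split.
- by rewrite h00 mulr1.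
- by rewrite mulf_neq0 // h11.
- rewrite /form z01 z02 z12 h11; congr mk3; ring.
Qed.

End Grp.

Section Orb.
Variable R : realType.

Lemma col3_neq0 (x y z : R) : [|| x != 0, y != 0 | z != 0] -> col3 x y z != 0.
Proof.
move=> h; apply/eqP; rewrite col3_zero => /col3_inj [E1 E2 E3]; move: h.
by rewrite E1 E2 E3 eqxx.
Qed.

Lemma orbit_diag_aux (s00 s01 s02 s11 s12 s22 : R) :
  (forall x : 'cV[R]_3, x != 0 ->
     0 < (x^T *m mk3 s00 s01 s02 s01 s11 s12 s02 s12 s22 *m x) 0 0) ->
  exists lam : R, 0 < lam /\ exists h : 'M[R]_3, RxAut (invmx h) /\
    h^T *m mk3 s00 s01 s02 s01 s11 s12 s02 s12 s22 *m h = mk3 1 0 0 0 1 0 0 0 lam.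
Proof.
set S := mk3 _ _ _ _ _ _ _ _ _ => pd.
have s22p : 0 < s22.
  have := pd (col3 0 0 1); rewrite quad3.
  have -> : col3 0 0 1 != 0 :> 'cV[R]_3.
    by apply/eqP; rewrite col3_zero => /col3_inj [_ _ /eqP]; rewrite oner_eq0.
  by move/(_ isT); rewrite !(mulr0, mul0r, add0r, addr0, mul1r, mulr1).
have s22n : s22 != 0 by rewrite gt_eqF.
pose r := - s12 / s22.
pose q1 := 0 * (s00 * 0 + s01 * 1 + s02 * r) + 1 * (s01 * 0 + s11 * 1 + s12 * r)
           + r * (s02 * 0 + s12 * 1 + s22 * r).
have q1p : 0 < q1 by have := pd (col3 0 1 r); rewrite quad3 col3_neq0 ?oner_eq0 ?orbT // => /(_ isT).
have q1n : q1 != 0 by rewrite gt_eqF.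
pose d2 := s11 * s22 - s12 ^+ 2.
have d2n : d2 != 0.
  have -> : d2 = s22 * q1 by rewrite /d2 /q1 /r; field.
  by rewrite mulf_neq0.
pose P := (s12 * s02 - s22 * s01) / d2.
pose Qq := (s12 * s01 - s11 * s02) / d2.
pose q0 := 1 * (s00 * 1 + s01 * P + s02 * Qq) + P * (s01 * 1 + s11 * P + s12 * Qq)
           + Qq * (s02 * 1 + s12 * P + s22 * Qq).
have q0p : 0 < q0 by have := pd (col3 1 P Qq); rewrite quad3 col3_neq0 ?oner_eq0 ?orbT // => /(_ isT).
pose a := (Num.sqrt q0)^-1.
pose b := (Num.sqrt q1)^-1.
have an : a != 0 by rewrite invr_eq0 gt_eqF // sqrtr_gt0.
have bn : b != 0 by rewrite invr_eq0 gt_eqF // sqrtr_gt0.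
have aa : a * q0 * a = 1.
  rewrite /a mulrC mulrA -expr2 exprVn sqr_sqrtr ?ltW // mulVf // gt_eqF //.
have bb : b * q1 * b = 1.
  rewrite /b mulrC mulrA -expr2 exprVn sqr_sqrtr ?ltW // mulVf // gt_eqF //.
exists (b * s22 * b); split.
  by rewrite -mulrA mulr_gt0 ?mulr_gt0 // invr_gt0 sqrtr_gt0.
pose H0 := form 1 P 1 Qq r.
pose D := mk3 a 0 0 0 b 0 0 0 b.
have M0 : H0^T *m S *m H0 = mk3 q0 0 0 0 q1 0 0 0 s22.
  rewrite /H0 /S /form mk3_tr !mk3_mul /q0 /q1 /P /Qq /r.
  move: d2n; rewrite /d2 => d2n.
  congr mk3; field; by rewrite ?d2n ?s22n ?andbT.
exists (H0 *m D); split.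
  have -> : H0 *m D = form a (P * a) b (Qq * a) (r * b).
    by rewrite /H0 /D /form mk3_mul; congr mk3; ring.
  by rewrite form_inv //; apply: forminv_RxAut.
have -> : (H0 *m D)^T *m S *m (H0 *m D) = D^T *m (H0^T *m S *m H0) *m D.
  by rewrite trmx_mul !mulmxA.
rewrite M0 /D mk3_tr !mk3_mul.
congr mk3; try ring.
  by rewrite -[RHS]aa; ring.
by rewrite -[RHS]bb; ring.
Qed.

Lemma orbit_diag (S : 'M[R]_3) : posdef S ->
  exists lam : R, 0 < lam /\ Defs.orbit S (mk3 1 0 0 0 1 0 0 0 lam).
Proof.
move=> [St pd].
have sym i j : S i j = S j i by rewrite -{1}St mxE.
have E : S = mk3 (S o0 o0) (S o0 o1) (S o0 o2) (S o0 o1) (S o1 o1) (S o1 o2)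
                 (S o0 o2) (S o1 o2) (S o2 o2).
  by rewrite {1}(mk3_eta S) (sym o1 o0) (sym o2 o0) (sym o2 o1).
move: pd; rewrite E => pd.
have [lam [lp [h [hR hE]]]] := orbit_diag_aux pd.
exists lam; split => //; exists (invmx h) => //.
by rewrite /act invmxK -hE -E.
Qed.

End Orb.

Ltac ocase2 i := let H := fresh in case: i => [[|[|[|?]]] H]; last (exfalso; by move: H).

Section Der.
Variable R : realType.
Implicit Types (f g : R -> R) (x : R).

Lemma dD f g x : derivable f x 1 -> derivable g x 1 -> derivable (fun t => f t + g t) x 1.
Proof. exact: derivableD. Qed.
Lemma dB f g x : derivable f x 1 -> derivable g x 1 -> derivable (fun t => f t - g t) x 1.
Proof. exact: derivableB. Qed.
Lemma dN f x : derivable f x 1 -> derivable (fun t => - f t) x 1.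
Proof. exact: derivableN. Qed.
Lemma dM f g x : derivable f x 1 -> derivable g x 1 -> derivable (fun t => f t * g t) x 1.
Proof. exact: derivableM. Qed.
Lemma dV f x : f x != 0 -> derivable f x 1 -> derivable (fun t => (f t)^-1) x 1.
Proof. exact: derivableV. Qed.
Lemma dX2 f x : derivable f x 1 -> derivable (fun t => f t ^+ 2) x 1.
Proof. by move=> h; rewrite (_ : (fun t => f t ^+ 2) = (fun t => f t * f t)); [apply: dM|apply/funext => t; rewrite expr2]. Qed.
Lemma dcst (c : R) x : derivable (fun _ : R => c) x 1.
Proof. exact: derivable_cst. Qed.
Lemma did x : derivable (fun t : R => t) x 1.
Proof. exact: derivable_id. Qed.

Lemma DD f g x : derivable f x 1 -> derivable g x 1 ->
  derive1 (fun t => f t + g t) x = derive1 f x + derive1 g x.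
Proof. by move=> hf hg; rewrite !derive1E; apply: deriveD. Qed.
Lemma DB f g x : derivable f x 1 -> derivable g x 1 ->
  derive1 (fun t => f t - g t) x = derive1 f x - derive1 g x.
Proof. by move=> hf hg; rewrite !derive1E; apply: deriveB. Qed.
Lemma DN f x : derivable f x 1 -> derive1 (fun t => - f t) x = - derive1 f x.
Proof. by move=> hf; rewrite !derive1E; apply: deriveN. Qed.
Lemma DM f g x : derivable f x 1 -> derivable g x 1 ->
  derive1 (fun t => f t * g t) x = f x * derive1 g x + g x * derive1 f x.
Proof. by move=> hf hg; rewrite !derive1E; apply: deriveM. Qed.
Lemma DZ f (k : R) x : derivable f x 1 ->
  derive1 (fun t => k * f t) x = k * derive1 f x.
Proof. by move=> hf; rewrite !derive1E; apply: deriveMl. Qed.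
Lemma DV f x : f x != 0 -> derivable f x 1 ->
  derive1 (fun t => (f t)^-1) x = - (f x)^-2 * derive1 f x.
Proof. by move=> h0 hf; rewrite !derive1E; apply: deriveV. Qed.
Lemma Dcst (c : R) x : derive1 (fun _ : R => c) x = 0.
Proof. exact: derive1_cst. Qed.
Lemma Did x : derive1 (fun t : R => t) x = 1.
Proof. by rewrite derive1E derive_id. Qed.
Lemma Dhorner (p : {poly R}) x : derive1 (horner p) x = p^`().[x].
Proof. by rewrite derive1E derive_val. Qed.
Lemma dhorner (p : {poly R}) x : derivable (horner p) x 1.
Proof. exact: derivable_horner. Qed.

Lemma eq_derivable f g x : f = g -> derivable f x 1 -> derivable g x 1.
Proof. by move=> ->. Qed.

Lemma derivable_mk3 (f00 f01 f02 f10 f11 f12 f20 f21 f22 : R -> R) x :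
  derivable f00 x 1 -> derivable f01 x 1 -> derivable f02 x 1 ->
  derivable f10 x 1 -> derivable f11 x 1 -> derivable f12 x 1 ->
  derivable f20 x 1 -> derivable f21 x 1 -> derivable f22 x 1 ->
  derivable (fun t => mk3 (f00 t) (f01 t) (f02 t) (f10 t) (f11 t) (f12 t)
                          (f20 t) (f21 t) (f22 t)) x 1.
Proof.
move=> h00 h01 h02 h10 h11 h12 h20 h21 h22; apply/derivable_mxP => i j.
ocase2 i; ocase2 j.
- by apply: (eq_derivable _ h00); apply/funext => t; rewrite mxE.
- by apply: (eq_derivable _ h01); apply/funext => t; rewrite mxE.
- by apply: (eq_derivable _ h02); apply/funext => t; rewrite mxE.
- by apply: (eq_derivable _ h10); apply/funext => t; rewrite mxE.
- by apply: (eq_derivable _ h11); apply/funext => t; rewrite mxE.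
- by apply: (eq_derivable _ h12); apply/funext => t; rewrite mxE.
- by apply: (eq_derivable _ h20); apply/funext => t; rewrite mxE.
- by apply: (eq_derivable _ h21); apply/funext => t; rewrite mxE.
- by apply: (eq_derivable _ h22); apply/funext => t; rewrite mxE.
Qed.

Lemma derive1_mk3 (f00 f01 f02 f10 f11 f12 f20 f21 f22 : R -> R) x :
  derivable f00 x 1 -> derivable f01 x 1 -> derivable f02 x 1 ->
  derivable f10 x 1 -> derivable f11 x 1 -> derivable f12 x 1 ->
  derivable f20 x 1 -> derivable f21 x 1 -> derivable f22 x 1 ->
  derive1 (fun t => mk3 (f00 t) (f01 t) (f02 t) (f10 t) (f11 t) (f12 t)
                          (f20 t) (f21 t) (f22 t)) x =
  mk3 (derive1 f00 x) (derive1 f01 x) (derive1 f02 x) (derive1 f10 x)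
      (derive1 f11 x) (derive1 f12 x) (derive1 f20 x) (derive1 f21 x) (derive1 f22 x).
Proof.
move=> h00 h01 h02 h10 h11 h12 h20 h21 h22.
rewrite derive1E derive_mx; last exact: derivable_mk3.
apply/matrixP => i j; rewrite !mxE; ocase2 i; ocase2 j;
  by rewrite /= derive1E; congr ('D_1 _ x); apply/funext => t; rewrite mxE.
Qed.

Definition C2 f := (forall t, derivable f t 1) /\ (forall t, derivable (derive1 f) t 1).

Lemma C2_cst (c : R) : C2 (fun _ => c).
Proof.
split=> t; first exact: dcst.
have -> : derive1 (fun _ : R => c) = fun _ => 0 by apply/funext => s; exact: Dcst.
exact: dcst.
Qed.

Lemma C2_poly (p : {poly R}) : C2 (horner p).
Proof.
split=> t; first exact: dhorner.
have -> : derive1 (horner p) = horner p^`() by apply/funext => s; exact: Dhorner.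
exact: dhorner.
Qed.

Lemma C2_invpoly (p : {poly R}) : (forall t, p.[t] != 0) -> C2 (fun t => (p.[t])^-1).
Proof.
move=> p0; split=> t; first by apply: dV => //; exact: dhorner.
have -> : derive1 (fun t => (p.[t])^-1) = fun s => - ((p.[s]) ^+ 2)^-1 * p^`().[s].
  by apply/funext => s; rewrite (DV (p0 s) (@dhorner p s)) Dhorner.
apply: dM; first by apply: dN; apply: dV; [rewrite expf_neq0 //|apply: dX2; exact: dhorner].
exact: dhorner.
Qed.

Lemma C2_mk3 (f00 f01 f02 f10 f11 f12 f20 f21 f22 : R -> R) :
  C2 f00 -> C2 f01 -> C2 f02 -> C2 f10 -> C2 f11 -> C2 f12 -> C2 f20 -> C2 f21 -> C2 f22 ->
  let g := fun t => mk3 (f00 t) (f01 t) (f02 t) (f10 t) (f11 t) (f12 t)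
                          (f20 t) (f21 t) (f22 t) in
  (forall t, derivable g t 1) /\ (forall t, derivable (derive1 g) t 1).
Proof.
move=> [a00 b00] [a01 b01] [a02 b02] [a10 b10] [a11 b11] [a12 b12] [a20 b20] [a21 b21] [a22 b22] g.
split=> t; first exact: derivable_mk3.
have -> : derive1 g = fun s => mk3 (derive1 f00 s) (derive1 f01 s) (derive1 f02 s)
   (derive1 f10 s) (derive1 f11 s) (derive1 f12 s) (derive1 f20 s) (derive1 f21 s) (derive1 f22 s).
  by apply/funext => s; rewrite /g derive1_mk3.
exact: derivable_mk3.
Qed.

Definition mk3P (p00 p01 p02 p10 p11 p12 p20 p21 p22 : {poly R}) (t : R) : 'M[R]_3 :=
  mk3 p00.[t] p01.[t] p02.[t] p10.[t] p11.[t] p12.[t] p20.[t] p21.[t] p22.[t].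

Lemma derive1_mk3P p00 p01 p02 p10 p11 p12 p20 p21 p22 :
  derive1 (mk3P p00 p01 p02 p10 p11 p12 p20 p21 p22) =
  mk3P p00^`() p01^`() p02^`() p10^`() p11^`() p12^`() p20^`() p21^`() p22^`().
Proof.
apply/funext => t; rewrite /mk3P.
rewrite (derive1_mk3 (@dhorner p00 t) (@dhorner p01 t) (@dhorner p02 t) (@dhorner p10 t)
  (@dhorner p11 t) (@dhorner p12 t) (@dhorner p20 t) (@dhorner p21 t) (@dhorner p22 t)).
by rewrite !Dhorner.
Qed.

End Der.

Ltac dtac := repeat match goal with
 | |- derivable (fun _ => ?c) _ _ => apply: dcst
 | |- derivable (fun t => t) _ _ => apply: did
 | |- derivable (fun _ => _ + _) _ _ => apply: dD
 | |- derivable (fun _ => _ - _) _ _ => apply: dB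
 | |- derivable (fun _ => _ * _) _ _ => apply: dM
 | |- derivable (fun _ => - _) _ _ => apply: dN
 | |- derivable (fun _ => _ ^+ 2) _ _ => apply: dX2
 | |- derivable (fun _ => (_)^-1) _ _ => apply: dV
 end.

Section Tan.
Variable R : realType.

Ltac dall := repeat match goal with
 | |- derivable (fun _ => _ + _) _ _ => apply: dD
 | |- derivable (fun _ => _ * _) _ _ => apply: dM
 | |- derivable (fun _ => - _) _ _ => apply: dN
 | |- derivable (fun _ => ?c) _ _ => apply: dcst
 | |- _ => assumption
 end.

Lemma tangent_L (lam : R) (gam : R -> 'M[R]_3) : lam != 0 -> adm_curve gam ->
  exists d00 d01 d02 d11 d12 : R,
    derive1 (ocurve gam (mk3 1 0 0 0 1 0 0 0 lam)) 0 =
    mk3 d00 d01 d02 d01 d11 d12 d02 d12 (lam * d11).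
Proof.
move=> ln [hR [g0 [hd _]]].
have dg : forall i j, derivable (fun t => gam t i j) 0 1.
  by apply/derivable_mxP; exact: hd.
have z i j : gam 0 i j = (1%:M : 'M[R]_3) i j by rewrite g0.
have hf t := RxAut_form (set_mem (hR t)).
pose kA := fun t => (gam t o0 o0)^-1.
pose kP := fun t => - gam t o1 o0 / (gam t o0 o0 * gam t o1 o1).
pose kB := fun t => (gam t o1 o1)^-1.
pose kQ := fun t => (gam t o1 o0 * gam t o2 o1 - gam t o1 o1 * gam t o2 o0)
                      / (gam t o0 o0 * gam t o1 o1 ^+ 2).
pose kR := fun t => - gam t o2 o1 / gam t o1 o1 ^+ 2.
have A0 : gam 0 o0 o0 = 1 by rewrite z mxE.
have B0 : gam 0 o1 o1 = 1 by rewrite z mxE.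
have P0 : gam 0 o1 o0 = 0 by rewrite z mxE.
have Q0 : gam 0 o2 o0 = 0 by rewrite z mxE.
have R0 : gam 0 o2 o1 = 0 by rewrite z mxE.
have hkA : derivable kA 0 1 by rewrite /kA; apply: dV; [rewrite A0 oner_neq0|exact: dg].
have hkB : derivable kB 0 1 by rewrite /kB; apply: dV; [rewrite B0 oner_neq0|exact: dg].
have hkP : derivable kP 0 1.
  rewrite /kP; apply: dM; first by apply: dN; exact: dg.
  apply: dV; first by rewrite A0 B0 mulr1 oner_neq0.
  by apply: dM; exact: dg.
have hkR : derivable kR 0 1.
  rewrite /kR; apply: dM; first by apply: dN; exact: dg.
  apply: dV; first by rewrite B0 expr1n oner_neq0.
  by apply: dX2; exact: dg.
have hkQ : derivable kQ 0 1.
  rewrite /kQ; apply: dM.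
    by apply: dB; apply: dM; exact: dg.
  apply: dV; first by rewrite A0 B0 expr1n mulr1 oner_neq0.
  by apply: dM; [exact: dg|apply: dX2; exact: dg].
pose c00 := fun t => kA t * kA t + kP t * kP t + lam * (kQ t * kQ t).
pose c01 := fun t => kP t * kB t + lam * (kQ t * kR t).
pose c02 := fun t => lam * (kQ t * kB t).
pose c11 := fun t => kB t * kB t + lam * (kR t * kR t).
pose c12 := fun t => lam * (kR t * kB t).
pose c22 := fun t => lam * (kB t * kB t).
have oc : ocurve gam (mk3 1 0 0 0 1 0 0 0 lam) =
   fun t => mk3 (c00 t) (c01 t) (c02 t) (c01 t) (c11 t) (c12 t) (c02 t) (c12 t) (c22 t).
  apply/funext => t; rewrite /ocurve /act.
  have [hA hB ->] := hf t.
  rewrite form_inv // /forminv /form mk3_tr !mk3_mul.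
  rewrite /c00 /c01 /c02 /c11 /c12 /c22 /kA /kP /kB /kQ /kR.
  congr mk3; ring.
have h00 : derivable c00 0 1 by rewrite /c00; dall.
have h01 : derivable c01 0 1 by rewrite /c01; dall.
have h02 : derivable c02 0 1 by rewrite /c02; dall.
have h11 : derivable c11 0 1 by rewrite /c11; dall.
have h12 : derivable c12 0 1 by rewrite /c12; dall.
have h22 : derivable c22 0 1 by rewrite /c22; dall.
have kA0 : kA 0 = 1 by rewrite /kA A0 invr1.
have kB0 : kB 0 = 1 by rewrite /kB B0 invr1.
have kR0 : kR 0 = 0 by rewrite /kR R0 oppr0 mul0r.
have c110 : c11 0 = 1 by rewrite /c11 kB0 kR0; ring.
have c120 : c12 0 = 0 by rewrite /c12 kB0 kR0; ring.
have c220 : c22 0 = lam by rewrite /c22 kB0; ring.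
pose F := fun t => lam * (c11 t * c22 t - c12 t * c12 t) - c22 t * c22 t.
have F0 : F = fun _ => 0.
  apply/funext => t; rewrite /F /c11 /c12 /c22; ring.
have dF : derive1 F 0 = 0 by rewrite F0 Dcst.
have dX := dB (dM h11 h22) (dM h12 h12).
have eA : derive1 (fun t => c11 t * c22 t - c12 t * c12 t) 0 =
   (c11 0 * derive1 c22 0 + c22 0 * derive1 c11 0)
   - (c12 0 * derive1 c12 0 + c12 0 * derive1 c12 0).
  by rewrite (DB (dM h11 h22) (dM h12 h12)) (DM h11 h22) (DM h12 h12).
have eB : derive1 F 0 = lam * derive1 (fun t => c11 t * c22 t - c12 t * c12 t) 0
   - (c22 0 * derive1 c22 0 + c22 0 * derive1 c22 0).
  by rewrite /F (DB (dM (@dcst R lam 0) dX) (dM h22 h22)) (DZ lam dX) (DM h22 h22).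
move: dF; rewrite eB eA c110 c120 c220 => dF.
have e : lam * (lam * derive1 c11 0 - derive1 c22 0) = 0 by rewrite -[RHS]dF; ring.
have e22 : derive1 c22 0 = lam * derive1 c11 0 by rewrite (subr0_eq (mul_eq0_r ln e)).
exists (derive1 c00 0), (derive1 c01 0), (derive1 c02 0), (derive1 c11 0), (derive1 c12 0).
by rewrite oc (derive1_mk3 h00 h01 h02 h01 h11 h12 h02 h12 h22) e22.
Qed.

End Tan.

Definition hornE := (hornerD, hornerN, hornerC, hornerX, hornerZ, hornerXn, hornerM, horner0, hornerMn).
Definition derE := (derivD, derivN, derivC, derivX, derivZ, derivXn, derivM, deriv0).

Section Curves.
Variable R : realType.
Variables (s k c lam : R).

Definition Qm := mk3 1 0 0 0 1 0 0 0 lam.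
Definition gam3 (t : R) := form 1 (- (s * t)) 1 0 0.

Lemma oc3 : ocurve gam3 Qm =
  mk3P (1%:P + (s * s) *: 'X^2) (s *: 'X) 0 (s *: 'X) 1%:P 0 0 0 lam%:P.
Proof.
apply/funext => t; rewrite /ocurve /act /gam3 form_inv ?oner_neq0 //.
rewrite /forminv /form /Qm mk3_tr !mk3_mul /mk3P; by congr mk3; rewrite ?hornE; field.
Qed.

Lemma V3 : derive1 (ocurve gam3 Qm) 0 = mk3 0 s 0 s 0 0 0 0 0.
Proof.
by rewrite oc3 derive1_mk3P /mk3P; congr mk3; rewrite ?derE ?hornE; ring.
Qed.

Lemma invQ : lam != 0 -> invmx Qm = mk3 1 0 0 0 1 0 0 0 lam^-1.
Proof.
move=> ln; apply: invmx_eq; rewrite /Qm mk3_mul mk3_one.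
by congr mk3; field.
Qed.

Lemma A3 : lam != 0 -> cov_accel (ocurve gam3 Qm) 0 =
  mk3 (s * s) 0 0 0 (- (s * s)) 0 0 0 0.
Proof.
move=> ln; rewrite /cov_accel oc3 !derive1_mk3P.
have -> : mk3P (1%:P + (s * s) *: 'X^2) (s *: 'X) 0 (s *: 'X) 1%:P 0 0 0 lam%:P 0 = Qm.
  by rewrite /mk3P /Qm; congr mk3; rewrite ?hornE; ring.
rewrite invQ // /mk3P !mk3_mul mk3_opp mk3_add.
by congr mk3; rewrite ?derE ?hornE; field.
Qed.

Definition gam4 (t : R) := form 1 0 1 (- (c * t)) 0.

Lemma oc4 : ocurve gam4 Qm =
  mk3P (1%:P + (lam * c * c) *: 'X^2) 0 ((lam * c) *: 'X) 0 1%:P 0 ((lam * c) *: 'X) 0 lam%:P.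
Proof.
apply/funext => t; rewrite /ocurve /act /gam4 form_inv ?oner_neq0 //.
by rewrite /forminv /form /Qm mk3_tr !mk3_mul /mk3P; congr mk3; rewrite ?hornE; field.
Qed.

Lemma V4 : derive1 (ocurve gam4 Qm) 0 = mk3 0 0 (lam * c) 0 0 0 (lam * c) 0 0.
Proof.
by rewrite oc4 derive1_mk3P /mk3P; congr mk3; rewrite ?derE ?hornE; ring.
Qed.

Lemma A4 : lam != 0 -> cov_accel (ocurve gam4 Qm) 0 =
  mk3 (lam * c * c) 0 0 0 0 0 0 0 (- (lam * lam * c * c)).
Proof.
move=> ln; rewrite /cov_accel oc4 !derive1_mk3P.
have -> : mk3P (1%:P + (lam * c * c) *: 'X^2) 0 ((lam * c) *: 'X) 0 1%:P 0 ((lam * c) *: 'X) 0 lam%:P 0 = Qm.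
  by rewrite /mk3P /Qm; congr mk3; rewrite ?hornE; ring.
rewrite invQ // /mk3P !mk3_mul mk3_opp mk3_add.
by congr mk3; rewrite ?derE ?hornE; field.
Qed.

Definition gam5 (t : R) := form 1 0 1 0 (- (c * t)).

Lemma oc5 : ocurve gam5 Qm =
  mk3P 1%:P 0 0 0 (1%:P + (lam * c * c) *: 'X^2) ((lam * c) *: 'X) 0 ((lam * c) *: 'X) lam%:P.
Proof.
apply/funext => t; rewrite /ocurve /act /gam5 form_inv ?oner_neq0 //.
by rewrite /forminv /form /Qm mk3_tr !mk3_mul /mk3P; congr mk3; rewrite ?hornE; field.
Qed.

Lemma V5 : derive1 (ocurve gam5 Qm) 0 = mk3 0 0 0 0 0 (lam * c) 0 (lam * c) 0.
Proof.
by rewrite oc5 derive1_mk3P /mk3P; congr mk3; rewrite ?derE ?hornE; ring.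
Qed.

Lemma A5 : lam != 0 -> cov_accel (ocurve gam5 Qm) 0 =
  mk3 0 0 0 0 (lam * c * c) 0 0 0 (- (lam * lam * c * c)).
Proof.
move=> ln; rewrite /cov_accel oc5 !derive1_mk3P.
have -> : mk3P 1%:P 0 0 0 (1%:P + (lam * c * c) *: 'X^2) ((lam * c) *: 'X) 0 ((lam * c) *: 'X) lam%:P 0 = Qm.
  by rewrite /mk3P /Qm; congr mk3; rewrite ?hornE; ring.
rewrite invQ // /mk3P !mk3_mul mk3_opp mk3_add.
by congr mk3; rewrite ?derE ?hornE; field.
Qed.

Definition pP : {poly R} := 1%:P + 'X + 'X^2.
Definition qP : {poly R} := 1%:P + k *: 'X + 'X^2.

Lemma pP_neq0 t : pP.[t] != 0.
Proof. by rewrite /pP ?hornE gt_eqF //; nra. Qed.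

Lemma qP_neq0 t : k * k = 2^-1 -> qP.[t] != 0.
Proof.
move=> kk; rewrite /qP ?hornE gt_eqF //.
have := sqr_ge0 (2 * t + k); nra.
Qed.

Definition gam1 (t : R) := form (pP.[t])^-1 0 1 0 0.

Lemma oc1 : ocurve gam1 Qm = mk3P (pP * pP) 0 0 0 1%:P 0 0 0 lam%:P.
Proof.
apply/funext => t; rewrite /ocurve /act /gam1 form_inv ?oner_neq0 ?invr_eq0 ?pP_neq0 //.
rewrite /forminv /form /Qm mk3_tr !mk3_mul /mk3P; congr mk3;
  rewrite ?hornerM ?hornerC ?horner0; field; by rewrite ?pP_neq0.
Qed.

Lemma V1 : derive1 (ocurve gam1 Qm) 0 = mk3 2 0 0 0 0 0 0 0 0.
Proof.
by rewrite oc1 derive1_mk3P /mk3P /pP; congr mk3; rewrite ?derE ?hornE; ring.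
Qed.

Lemma A1 : lam != 0 -> cov_accel (ocurve gam1 Qm) 0 = mk3 2 0 0 0 0 0 0 0 0.
Proof.
move=> ln; rewrite /cov_accel oc1 !derive1_mk3P.
have -> : mk3P (pP * pP) 0 0 0 1%:P 0 0 0 lam%:P 0 = Qm.
  by rewrite /mk3P /Qm /pP; congr mk3; rewrite ?hornE; ring.
rewrite invQ // /mk3P /pP !mk3_mul mk3_opp mk3_add.
by congr mk3; rewrite ?derE ?hornE; field.
Qed.

Definition gam2 (t : R) := form 1 0 (qP.[t])^-1 0 0.

Lemma oc2 : k * k = 2^-1 -> ocurve gam2 Qm = mk3P 1%:P 0 0 0 (qP * qP) 0 0 0 (lam *: (qP * qP)).
Proof.
move=> kk; apply/funext => t.
rewrite /ocurve /act /gam2 form_inv ?oner_neq0 ?invr_eq0 ?qP_neq0 //.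
rewrite /forminv /form /Qm mk3_tr !mk3_mul /mk3P; congr mk3;
  rewrite ?hornerM ?hornerC ?horner0 ?hornerZ ?hornerM; field; by rewrite ?qP_neq0.
Qed.

Lemma V2 : k * k = 2^-1 -> derive1 (ocurve gam2 Qm) 0 = mk3 0 0 0 0 (2 * k) 0 0 0 (lam * (2 * k)).
Proof.
by move=> kk; rewrite oc2 // derive1_mk3P /mk3P /qP; congr mk3; rewrite ?derE ?hornE; ring.
Qed.

Lemma A2 : k * k = 2^-1 -> lam != 0 -> cov_accel (ocurve gam2 Qm) 0 =
  mk3 0 0 0 0 (4 - 2 * (k * k)) 0 0 0 (lam * (4 - 2 * (k * k))).
Proof.
move=> kk ln; rewrite /cov_accel oc2 // !derive1_mk3P.
have -> : mk3P 1%:P 0 0 0 (qP * qP) 0 0 0 (lam *: (qP * qP)) 0 = Qm.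
  by rewrite /mk3P /Qm /qP; congr mk3; rewrite ?hornE; ring.
rewrite invQ // /mk3P /qP !mk3_mul mk3_opp mk3_add.
by congr mk3; rewrite ?derE ?hornE; field.
Qed.

End Curves.

Ltac cst2 := match goal with |- C2 (fun _ => ?c) => exact: C2_cst | _ => idtac end.

Section Assemble.
Variable R : realType.

Lemma C2_eq (f g : R -> R) : f = g -> C2 f -> C2 g. Proof. by move=> ->. Qed.

Lemma C2_lin (a : R) : C2 (fun t => - (a * t)).
Proof.
apply: (@C2_eq (horner (- (a *: 'X)))); last exact: C2_poly.
by apply/funext => t; rewrite ?hornE.
Qed.

Lemma adm_of (f00 f01 f02 f10 f11 f12 f20 f21 f22 : R -> R) :
  C2 f00 -> C2 f01 -> C2 f02 -> C2 f10 -> C2 f11 -> C2 f12 -> C2 f20 -> C2 f21 -> C2 f22 ->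
  (forall t, RxAut (mk3 (f00 t) (f01 t) (f02 t) (f10 t) (f11 t) (f12 t) (f20 t) (f21 t) (f22 t))) ->
  mk3 (f00 0) (f01 0) (f02 0) (f10 0) (f11 0) (f12 0) (f20 0) (f21 0) (f22 0) = 1%:M ->
  adm_curve (fun t => mk3 (f00 t) (f01 t) (f02 t) (f10 t) (f11 t) (f12 t) (f20 t) (f21 t) (f22 t)).
Proof.
move=> h00 h01 h02 h10 h11 h12 h20 h21 h22 hR h1.
split; first by move=> t; apply: mem_set; exact: hR.
split; first exact: h1.
exact: C2_mk3.
Qed.

Lemma adm3 (s : R) : adm_curve (gam3 s).
Proof.
have -> : gam3 s = fun t => mk3 1 0 0 (- (s * t)) 1 0 0 0 1 by [].
apply: adm_of; cst2; first exact: C2_lin.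
  by move=> t; apply: form_RxAut; rewrite oner_neq0.
by rewrite mk3_one; congr mk3; ring.
Qed.

Lemma adm4 (c : R) : adm_curve (gam4 c).
Proof.
have -> : gam4 c = fun t => mk3 1 0 0 0 1 0 (- (c * t)) 0 1 by [].
apply: adm_of; cst2; first exact: C2_lin.
  by move=> t; apply: form_RxAut; rewrite oner_neq0.
by rewrite mk3_one; congr mk3; ring.
Qed.

Lemma adm5 (c : R) : adm_curve (gam5 c).
Proof.
have -> : gam5 c = fun t => mk3 1 0 0 0 1 0 0 (- (c * t)) 1 by [].
apply: adm_of; cst2; first exact: C2_lin.
  by move=> t; apply: form_RxAut; rewrite oner_neq0.
by rewrite mk3_one; congr mk3; ring.
Qed.

Lemma adm1 : adm_curve (@gam1 R).
Proof.
have -> : @gam1 R = fun t => mk3 ((pP R).[t])^-1 0 0 0 1 0 0 0 1 by [].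
apply: adm_of; cst2.
- exact: C2_invpoly (@pP_neq0 R).
- by move=> t; apply: form_RxAut; rewrite ?oner_neq0 ?invr_eq0 ?pP_neq0.
- by rewrite mk3_one /pP; congr mk3; rewrite ?hornE; field.
Qed.

Lemma adm2 (k : R) : k * k = 2^-1 -> adm_curve (gam2 k).
Proof.
move=> kk.
have -> : gam2 k = fun t => mk3 1 0 0 0 (qP k).[t]^-1 0 0 0 (qP k).[t]^-1 by [].
apply: adm_of; cst2.
- exact: C2_invpoly (fun t => qP_neq0 t kk).
- exact: C2_invpoly (fun t => qP_neq0 t kk).
- by move=> t; apply: form_RxAut; rewrite ?oner_neq0 ?invr_eq0 ?qP_neq0.
- by rewrite mk3_one /qP; congr mk3; rewrite ?hornE; field.
Qed.

End Assemble.

Section Final.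
Variable R : realType.
Variables (s k c lam : R).

Definition Vt (n : nat) : 'M[R]_3 :=
  match n with
  | 0 => mk3 2 0 0 0 0 0 0 0 0
  | 1 => mk3 0 0 0 0 (2 * k) 0 0 0 (lam * (2 * k))
  | 2 => mk3 0 s 0 s 0 0 0 0 0
  | 3 => mk3 0 0 (lam * c) 0 0 0 (lam * c) 0 0
  | _ => mk3 0 0 0 0 0 (lam * c) 0 (lam * c) 0
  end.

Definition At (n : nat) : 'M[R]_3 :=
  match n with
  | 0 => mk3 2 0 0 0 0 0 0 0 0
  | 1 => mk3 0 0 0 0 (4 - 2 * (k * k)) 0 0 0 (lam * (4 - 2 * (k * k)))
  | 2 => mk3 (s * s) 0 0 0 (- (s * s)) 0 0 0 0
  | 3 => mk3 (lam * c * c) 0 0 0 0 0 0 0 (- (lam * lam * c * c))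
  | _ => mk3 0 0 0 0 (lam * c * c) 0 0 0 (- (lam * lam * c * c))
  end.

Definition gamF (i : 'I_5) : R -> 'M[R]_3 :=
  match nat_of_ord i with
  | 0 => @gam1 R
  | 1 => gam2 k
  | 2 => gam3 s
  | 3 => gam4 c
  | _ => gam5 c
  end.

Lemma hv : k * k = 2^-1 -> forall i : 'I_5,
  derive1 (ocurve (gamF i) (Qm lam)) 0 = Vt i.
Proof.
move=> kk; case=> [[|[|[|[|[|n]]]]] Hi].
- exact: V1.
- exact: V2 kk.
- exact: V3.
- exact: V4.
- exact: V5.
- by exfalso; move: Hi.
Qed.

Lemma hA : k * k = 2^-1 -> lam != 0 -> forall i : 'I_5,
  cov_accel (ocurve (gamF i) (Qm lam)) 0 = At i.
Proof.
move=> kk ln; case=> [[|[|[|[|[|n]]]]] Hi].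
- exact: A1 ln.
- exact: A2 kk ln.
- exact: A3 ln.
- exact: A4 ln.
- exact: A5 ln.
- by exfalso; move: Hi.
Qed.

Lemma sum5 (F : 'I_5 -> 'M[R]_3) :
  \sum_(i < 5) F i = F (@Ordinal 5 0 isT) + F (@Ordinal 5 1 isT) + F (@Ordinal 5 2 isT)
                     + F (@Ordinal 5 3 isT) + F (@Ordinal 5 4 isT).
Proof.
rewrite !big_ord_recl big_ord0 addr0 !addrA.
by congr (F _ + F _ + F _ + F _ + F _); apply: val_inj.
Qed.

Lemma metricQ (a00 a01 a02 a10 a11 a12 a20 a21 a22 b00 b01 b02 b10 b11 b12 b20 b21 b22 : R) :
  lam != 0 ->
  metric (Qm lam) (mk3 a00 a01 a02 a10 a11 a12 a20 a21 a22)
                  (mk3 b00 b01 b02 b10 b11 b12 b20 b21 b22) =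
  4^-1 * (a00 * b00 + a01 * b10 + a02 * b20 / lam + a10 * b01 + a11 * b11
          + a12 * b21 / lam + a20 * b02 / lam + a21 * b12 / lam + a22 * b22 / (lam * lam)).
Proof.
move=> ln; rewrite /metric invQ // !mk3_mul mk3_trace.
by field.
Qed.

End Final.

Lemma onbF (R : realType) (s k c lam : R) : s * s = 2 -> k * k = 2^-1 -> c * c = 2 / lam ->
  lam != 0 -> s != 0 -> k != 0 -> c != 0 -> onb_curves (Qm lam) (gamF s k c).
Proof.
move=> ss kk cc ln hs hk hc.
split.
  case=> [[|[|[|[|[|n]]]]] Hi].
  - exact: adm1.
  - exact: adm2 kk.
  - exact: adm3.
  - exact: adm4.
  - exact: adm5.
  - by exfalso; move: Hi.
split.
{ move=> i j; rewrite !(hv s c lam kk).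
  case: i => [[|[|[|[|[|n]]]]] Hi]; last (by exfalso; move: Hi).
  all: case: j => [[|[|[|[|[|m]]]]] Hj]; last (by exfalso; move: Hj).
  all: rewrite -val_eqE /= metricQ //.
  all: try by field; rewrite ?ln.
  all: first [ apply: (@etrans _ _ (2 * (k * k))); [by field; rewrite ?ln | by rewrite kk; field]
             | apply: (@etrans _ _ ((s * s) / 2)); [by field; rewrite ?ln | by rewrite ss; field]
             | apply: (@etrans _ _ (lam * (c * c) / 2)); [by field; rewrite ?ln | by rewrite cc; field; rewrite ?ln] ]. }
move=> v [gam [hg ->]].
have [d00 [d01 [d02 [d11 [d12 E]]]]] := tangent_L ln hg.
exists (fun i : 'I_5 => match nat_of_ord i with
   0 => d00 / 2 | 1 => d11 / (2 * k) | 2 => d01 / s | 3 => d02 / (lam * c) | _ => d12 / (lam * c) end).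
rewrite sum5 !(hv s c lam kk) /= /Qm E !mk3_scale !mk3_add.
by congr mk3; field; rewrite ?ln ?hs ?hk ?hc.
Qed.

Theorem proposition5p2 (R : realType) :
  forall S : 'M[R]_3, posdef S -> ~ minimal_orbit S.
Proof.
move=> S hS hmin.
have [lam [lp orb]] := orbit_diag hS.
have ln : lam != 0 by rewrite gt_eqF.
pose s := Num.sqrt (2 : R).
pose k := s^-1.
pose c := Num.sqrt (2 / lam).
have ss : s * s = 2 by rewrite -expr2 sqr_sqrtr // ler0n.
have kk : k * k = 2^-1 by rewrite -invfM ss.
have cc : c * c = 2 / lam by rewrite -expr2 sqr_sqrtr // divr_ge0 // ?ler0n // ltW.
have hs : s != 0.
  by apply/eqP => h; move: ss; rewrite h mul0r => /eqP; rewrite eq_sym pnatr_eq0.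
have hk : k != 0 by rewrite invr_eq0.
have hc : c != 0.
  apply/eqP => h; move: cc; rewrite h mul0r => /eqP; rewrite eq_sym mulf_eq0 invr_eq0.
  by rewrite (negbTE ln) orbF pnatr_eq0.
have honb := onbF ss kk cc ln hs hk hc.
have M := hmin _ orb _ _ honb.
change (mean_curv (Qm lam) (gamF s k c) = 0) in M.
move: M; rewrite /mean_curv; cbv beta zeta.
move/eqP; rewrite subr_eq0 => /eqP E.
rewrite !sum5 !(hA s c kk ln) !(hv s c lam kk) /= in E.
have E2 := congr1 (fun M : 'M[R]_3 => M o2 o2 - lam * M o1 o1) E.
rewrite /= !mk3_scale !mk3_add !mxE /= in E2.
move/eqP: E2; rewrite -subr_eq0 => /eqP E3.
have E4 : lam * (s * s) - 3 * lam * (lam * (c * c)) = 0 by rewrite -E3; ring.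
rewrite ss cc in E4.
have E5 : lam * 2 - 3 * lam * (lam * (2 / lam)) = - (4 * lam) by field.
move: E4; rewrite E5 => /eqP; rewrite oppr_eq0 mulf_eq0 (negbTE ln) orbF pnatr_eq0.
by [].
Qed.
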